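(* Let $\{S;\tilde w_1,\dots,\tilde w_N;p_1,\dots,p_N\}$ be a DIFS with associated Markov chain $\{\tilde X_k\}$, and let $C\subset S$ be nonempty. (a) $C$ is a closed class of $\{\tilde X_k\}$ if and only if $\bigcup_{i=1}^N\tilde w_i(C)\subset C$. (b) If $C$ is a communication class of $\{\tilde X_k\}$, then $\bigcup_{i=1}^N\tilde w_i(C)\supset C$.
   Context: $\mathcal D^n(\delta)=\{\delta m:m\in\mathbb Z^n\}$ for fixed $\delta>0$. A DIFS $\{S;\tilde w_1,\dots,\tilde w_N;p_1,\dots,p_N\}$ consists of $S\subset\mathcal D^n(\delta)$, maps $\tilde w_i:S\to S$, and functions $p_i:S\to(0,1]$ with $\sum_ip_i(\tilde x)=1$ for every $\tilde x\in S$; its associated Markov chain on $S$ has transition probabilities $P(\tilde x,\tilde y)=\sum_ip_i(\tilde x)\mathbf 1_{\{\tilde y\}}(\tilde w_i(\tilde x))$. A state $\tilde y$ is accessible from $\tilde x$ if $P^k(\tilde x,\tilde y)>0$ for some integer $k\ge1$. A communication class is a maximal nonempty subset $C$ such that for all $\tilde x,\tilde y\in C$ (not necessarily distinct) $\tilde y$ is accessible from $\tilde x$. A closed class is a nonempty subset $C$ such that every state accessible from a state of $C$ belongs to $C$. *)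

(* Defs.v *)
From HB Require Import structures.
From mathcomp Require Import all_boot all_order all_algebra.
From mathcomp Require Import reals.
Set Implicit Arguments. Unset Strict Implicit. Unset Printing Implicit Defensive.
Import Order.TTheory GRing.Theory Num.Theory.
Local Open Scope ring_scope.

Definition lattice (R : realType) (n : nat) (delta : R) (x : 'rV[R]_n) : Prop :=
  exists m : 'rV[int]_n, x = delta *: map_mx (fun z : int => z%:~R) m.

Definition is_DIFS (R : realType) (n : nat) (delta : R) (S : 'rV[R]_n -> Prop)
  (N : nat) (w : 'I_N -> 'rV[R]_n -> 'rV[R]_n) (p : 'I_N -> 'rV[R]_n -> R) : Prop :=
  [/\ 0 < delta,
      (forall x, S x -> lattice delta x),
      (forall i x, S x -> S (w i x)),
      (forall i x, S x -> 0 < p i x <= 1) &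
      (forall x, S x -> \sum_(i < N) p i x = 1)].

Definition trans (R : realType) (n N : nat) (w : 'I_N -> 'rV[R]_n -> 'rV[R]_n)
  (p : 'I_N -> 'rV[R]_n -> R) (x y : 'rV[R]_n) : R :=
  \sum_(i < N) p i x * (w i x == y)%:R.

(* The matrix product
   P^(k+1)(x,y) = sum_z P(x,z) P^k(z,y) has, for each x, only the finitely many
   nonzero terms z = w_i(x); collecting them gives sum_i p_i(x) P^k(w_i x, y). *)
Fixpoint transk (R : realType) (n N : nat) (w : 'I_N -> 'rV[R]_n -> 'rV[R]_n)
  (p : 'I_N -> 'rV[R]_n -> R) (k : nat) (x y : 'rV[R]_n) : R :=
  match k with
  | 0 => (x == y)%:R
  | k'.+1 => \sum_(i < N) p i x * transk w p k' (w i x) y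
  end.

Definition accessible (R : realType) (n N : nat) (w : 'I_N -> 'rV[R]_n -> 'rV[R]_n)
  (p : 'I_N -> 'rV[R]_n -> R) (x y : 'rV[R]_n) : Prop :=
  exists k : nat, (1 <= k)%N /\ 0 < transk w p k x y.

Definition closed_class (R : realType) (n N : nat) (S : 'rV[R]_n -> Prop)
  (w : 'I_N -> 'rV[R]_n -> 'rV[R]_n) (p : 'I_N -> 'rV[R]_n -> R)
  (C : 'rV[R]_n -> Prop) : Prop :=
  [/\ (exists x, C x), (forall x, C x -> S x) &
      (forall x y, C x -> S y -> accessible w p x y -> C y)].

Definition communicating (R : realType) (n N : nat)
  (w : 'I_N -> 'rV[R]_n -> 'rV[R]_n) (p : 'I_N -> 'rV[R]_n -> R)
  (C : 'rV[R]_n -> Prop) : Prop :=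
  forall x y, C x -> C y -> accessible w p x y.

Definition comm_class (R : realType) (n N : nat) (S : 'rV[R]_n -> Prop)
  (w : 'I_N -> 'rV[R]_n -> 'rV[R]_n) (p : 'I_N -> 'rV[R]_n -> R)
  (C : 'rV[R]_n -> Prop) : Prop :=
  [/\ (exists x, C x), (forall x, C x -> S x), communicating w p C &
      (forall D : 'rV[R]_n -> Prop, (forall x, D x -> S x) ->
         (forall x, C x -> D x) -> communicating w p D ->
         forall x, D x -> C x)].

(* Main.v *)
Require Import Defs.
From HB Require Import structures.
From mathcomp Require Import all_boot all_order all_algebra.
From mathcomp Require Import reals.
Import Order.TTheory GRing.Theory Num.Theory.
Local Open Scope ring_scope.

Section Aux.
Variables (R : realType) (n N : nat) (S : 'rV[R]_n -> Prop)
  (w : 'I_N -> 'rV[R]_n -> 'rV[R]_n) (p : 'I_N -> 'rV[R]_n -> R).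
Hypothesis hw : forall i x, S x -> S (w i x).
Hypothesis hp : forall i x, S x -> 0 < p i x <= 1.

Fixpoint reach (k : nat) (x y : 'rV[R]_n) : Prop :=
  match k with 0 => x = y | k'.+1 => exists i, reach k' (w i x) y end.

Lemma transk_ge0 k : forall x y, S x -> 0 <= transk w p k x y.
Proof.
elim: k => [|k IH] x y Sx /=; first by rewrite ler0n.
apply: sumr_ge0 => i _; apply: mulr_ge0.
  by case/andP: (hp i _ Sx) => /ltW.
exact: (IH (w i x) y (hw i _ Sx)).
Qed.

Lemma transk_pos k : forall x y, S x -> (0 < transk w p k x y <-> reach k x y).
Proof.
elim: k => [|k IH] x y Sx /=.
  by split; [case: eqP => // _; rewrite ltxx | move=> ->; rewrite eqxx ltr01].
split.
  move=> H; case: (boolP [exists i, 0 < p i x * transk w p k (w i x) y]).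
    move/existsP=> [i Hi]; exists i; apply/(IH _ _ (hw i _ Sx)).
    have /andP[pp _] := hp i _ Sx.
    by rewrite pmulr_rgt0 in Hi.
  move/existsPn=> Hn; exfalso; move: H; apply/negP; rewrite -leNgt.
  apply: sumr_le0 => i _; move: (Hn i); rewrite -leNgt //.
move=> [i Hi]; apply: (@lt_le_trans _ _ (p i x * transk w p k (w i x) y)).
  have /andP[pp _] := hp i _ Sx.
  by rewrite pmulr_rgt0 //; apply/(IH _ _ (hw i _ Sx)).
rewrite (bigD1 i) //= lerDl; apply: sumr_ge0 => j _; apply: mulr_ge0.
  by case/andP: (hp j _ Sx) => /ltW.
exact: transk_ge0 _ _ _ (hw j _ Sx).
Qed.

Lemma reach_trans k m : forall x z y, reach k x z -> reach m z y -> reach (k + m) x y.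
Proof.
elim: k => [|k IH] x z y /=; first by move=> ->.
by move=> [i Hi] Hm; exists i; apply: IH Hi Hm.
Qed.

Lemma reach_S k : forall x y, S x -> reach k x y -> S y.
Proof.
elim: k => [|k IH] x y Sx /=; first by move=> <-.
by move=> [i Hi]; apply: IH Hi; apply: hw.
Qed.

Lemma reach_last k : forall x y, reach k.+1 x y -> exists z j, reach k x z /\ w j z = y.
Proof.
elim: k => [|k IH] x y /=.
  by move=> [i <-]; exists x, i.
move=> [i Hi]; have [z [j [H1 H2]]] := IH _ _ Hi.
by exists z, j; split => //; exists i.
Qed.

Lemma acc_reach x y : S x -> accessible w p x y <-> exists k, (1 <= k)%N /\ reach k x y.
Proof.
move=> Sx; split; move=> [k [Hk H]]; exists k; split => //.
  by apply/(transk_pos _ _ _ Sx).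
by apply/(transk_pos _ _ _ Sx).
Qed.
End Aux.

Arguments reach {R n N} w k x y.
Arguments acc_reach {R n N S w p} hw hp {x y}.
Arguments reach_S {R n N S w} hw {k x y}.
Arguments reach_trans {R n N w k m x z y}.
Arguments reach_last {R n N w k x y}.

Theorem theorem11 (R : realType) (n : nat) (delta : R) (S : 'rV[R]_n -> Prop)
  (N : nat) (w : 'I_N -> 'rV[R]_n -> 'rV[R]_n) (p : 'I_N -> 'rV[R]_n -> R)
  (C : 'rV[R]_n -> Prop) :
  is_DIFS delta S w p ->
  (forall x, C x -> S x) -> (exists x, C x) ->
  (closed_class S w p C <-> (forall (i : 'I_N) x, C x -> C (w i x))) /\
  (comm_class S w p C -> forall y, C y -> exists (i : 'I_N) x, C x /\ w i x = y).
Proof.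
move=> [_ _ hw hp _] CS Cne; split.
  split.
    move=> [_ _ Hc] i x Cx; apply: (Hc x (w i x) Cx (hw i x (CS x Cx))).
    apply/(acc_reach hw hp (CS _ Cx)); exists 1%N; split => //.
    by exists i.
  move=> Hc; split => // x y Cx _ /(acc_reach hw hp (CS _ Cx)) [k [_ Hk]].
  elim: k x Cx Hk => [|k IH] x Cx /=; first by move=> <-.
  by move=> [i Hi]; apply: IH Hi; apply: Hc.
move=> [_ _ Hcom Hmax] y Cy.
have Sy := CS _ Cy.
have /(acc_reach hw hp Sy) [k [Hk Hr]] := Hcom _ _ Cy Cy.
case: k Hk Hr => // k _ /reach_last [z [j [Hyz Hzy]]].
have Sz : S z := reach_S hw Sy Hyz.
pose D := fun a => C a \/ a = z.
have toy : forall a, D a -> exists k, (1 <= k)%N /\ reach w k a y.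
  move=> a [Ca|->].
    by apply/(acc_reach hw hp (CS _ Ca)); apply: Hcom.
  by exists 1%N; split => //; exists j.
have fromy : forall b, D b -> exists k, reach w k y b.
  move=> b [Cb|->]; last by exists k.
  by have /(acc_reach hw hp Sy) [m [_ Hm]] := Hcom _ _ Cy Cb; exists m.
have DS : forall a, D a -> S a by move=> a [/CS|->].
have Dcom : communicating w p D.
  move=> a b Da Db; apply/(acc_reach hw hp (DS _ Da)).
  have [m1 [H1 R1]] := toy _ Da; have [m2 R2] := fromy _ Db.
  exists (m1 + m2)%N; split; first by rewrite (leq_trans H1) // leq_addr.
  exact: reach_trans R1 R2.
have Cz : C z by apply: (Hmax D DS) => //; [move=> x Cx; left | right].
by exists j, z.
Qed.
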